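(* Let $p$ be a prime and let $P$ be a finite $p$-group which can be generated by at most two elements. Let $f$ be a prime power such that $\mathrm{PSL}(2,f)$ is a non-abelian simple group, and suppose $\mathrm{PSL}(2,f)$ acts on $P$ via automorphisms. Then the action of $\mathrm{PSL}(2,f)$ on $P$ is trivial. *)

(* Defs.v *)
From HB Require Import structures.
From mathcomp Require Import all_boot all_order all_algebra all_fingroup all_solvable.
Set Implicit Arguments. Unset Strict Implicit. Unset Printing Implicit Defensive.
Import GRing.Theory.
Local Open Scope ring_scope.

Definition SL2 (F : finFieldType) : {set {'GL_2[F]}} :=
  [set g : {'GL_2[F]} | \det (GLval g) == 1].

Lemma SL2_group_set (F : finFieldType) : group_set (SL2 F).
Proof.
apply/group_setP; split.
  by rewrite inE GL_1E det1.
move=> x y; rewrite !inE => /eqP dx /eqP dy.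
by rewrite GL_ME det_mulmx dx dy mulr1.
Qed.

Canonical SL2_group (F : finFieldType) := Group (SL2_group_set F).

Definition PSL2 (F : finFieldType) : {set coset_of 'Z(SL2 F)} :=
  (SL2 F / 'Z(SL2 F))%g.
Canonical PSL2_group (F : finFieldType) : {group coset_of 'Z(SL2 F)} :=
  Eval hnf in [group of PSL2 F].

(* Main.v *)
Require Import Defs.
From HB Require Import structures.
From mathcomp Require Import all_boot all_order all_algebra all_fingroup all_solvable.
From mathcomp Require Import mxrepresentation mxabelem.
From mathcomp Require Import ring.

Set Implicit Arguments. Unset Strict Implicit. Unset Printing Implicit Defensive.

Section RingHelpers.
Import GRing.Theory.
Local Open Scope ring_scope.

Lemma det22 (R : comRingType) (M : 'M[R]_2) :
  \det M = M 0 0 * M 1 1 - M 0 1 * M 1 0.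
Proof.
rewrite (expand_det_row M 0) !big_ord_recl big_ord0 addr0.
rewrite /cofactor !det_mx11 !mxE /=.
have l1 : lift (0 : 'I_2) (0 : 'I_1) = 1 by apply/val_inj.
have l2 : lift (lift (ord0 : 'I_2) (ord0 : 'I_1)) (0 : 'I_1) = 0 by apply/val_inj.
have l3 : lift (ord0 : 'I_2) (ord0 : 'I_1) = 1 by apply/val_inj.
rewrite l2 l1 ?l3 expr0 mul1r add0n expr1 mulN1r mulrN.
by [].
Qed.

Lemma mul22 (R : ringType) (A B : 'M[R]_2) i j :
  (A *m B) i j = A i 0 * B 0 j + A i 1 * B 1 j.
Proof.
rewrite mxE !big_ord_recl big_ord0 addr0.
by have -> : lift ord0 (ord0 : 'I_1) = 1 :> 'I_2 by apply/val_inj.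
Qed.

Lemma ord2 (i : 'I_2) : i = 0 \/ i = 1.
Proof. by case: i => [[|[|i]] Hi]; [left; apply: val_inj|right; apply: val_inj|]. Qed.

Lemma invol22 (F : fieldType) (M : 'M[F]_2) : (2%:R : F) != 0 ->
  M *m M = 1%:M -> \det M = 1 -> exists c, M = c%:M.
Proof.
move=> n2 MM dM.
have e i j : (M *m M) i j = (i == j)%:R by rewrite MM mxE.
have e00 := e 0 0; have e01 := e 0 1; have e10 := e 1 0; have e11 := e 1 1.
rewrite !mul22 /= in e00 e01 e10 e11.
rewrite det22 in dM.
set a := M 0 0 in e00 e01 e10 e11 dM; set b := M 0 1 in e00 e01 e10 e11 dM.
set c := M 1 0 in e00 e01 e10 e11 dM; set d := M 1 1 in e00 e01 e10 e11 dM.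
have [ad0|adn0] := eqVneq (a + d) 0.
  suff : (2%:R : F) = 0 by move/eqP; rewrite (negbTE n2).
  have -> : (2%:R : F) = (a*a+b*c) + (a*d - b*c) by rewrite e00 dM -mulr2n.
  have -> : (a*a+b*c) + (a*d - b*c) = a * (a + d) by ring.
  by rewrite ad0 mulr0.
have b0 : b = 0.
  by apply/eqP; move/eqP: e01; rewrite (mulrC a b) -mulrDr mulf_eq0 (negbTE adn0) orbF.
have c0 : c = 0.
  by apply/eqP; move/eqP: e10; rewrite (mulrC d c) -mulrDr mulf_eq0 (negbTE adn0) orbF.
rewrite b0 c0 !mul0r !subr0 addr0 add0r in e00 e11 dM.
have ad : a = d.
  by rewrite -[LHS]mulr1 -[X in _ * X = _]e11 mulrA dM mul1r.
exists a; apply/matrixP => i j; rewrite !mxE.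
by case: (ord2 i) => ->; case: (ord2 j) => -> //=; rewrite -/a -/b -/c -/d ?b0 ?c0 ?ad.
Qed.
Lemma repr_dim1_abelian (F : fieldType) (gT : finGroupType) (G : {group gT}) n
    (rG : mx_representation F G n) :
  n = 1%N -> mx_faithful rG -> abelian G.
Proof.
move=> n1; subst n => ffG; apply/centsP => x Gx y Gy.
apply: (mx_faithful_inj ffG); rewrite ?groupM //.
rewrite !repr_mxM //.
by rewrite [rG x]mx11_scalar [rG y]mx11_scalar -!scalar_mxM mulrC.
Qed.

Lemma repr_det1 (F : fieldType) (gT : finGroupType) (G : {group gT}) n
    (rG : mx_representation F G n) :
  (G \subset G^`(1))%g -> forall g, g \in G -> \det (rG g) = 1.
Proof.
move=> sGG'.
pose H := [set g in G | \det (rG g) == 1].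
have gH : group_set H.
  apply/group_setP; split; first by rewrite inE group1 repr_mx1 det1 eqxx.
  move=> x y; rewrite !inE => /andP[Gx /eqP dx] /andP[Gy /eqP dy].
  by rewrite groupM // repr_mxM // det_mulmx dx dy mulr1 eqxx.
have sG'H : (G^`(1) \subset H)%g.
  rewrite derg1 -[H]/(gval (Group gH)) gen_subG; apply/subsetP => _ /imset2P[a b Ga Gb ->].
  rewrite inE groupR //= /commg /conjg !repr_mxM ?groupM ?groupV //.
  rewrite !repr_mxV // !det_mulmx !det_inv.
  have ua : \det (rG a) != 0 by rewrite -unitfE -unitmxE repr_mx_unit.
  have ub : \det (rG b) != 0 by rewrite -unitfE -unitmxE repr_mx_unit.
  by rewrite mulrA [_^-1 * _^-1]mulrC -mulrA [X in _ * X]mulrA mulVf // mul1r mulVf.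
move=> g Gg; have := subsetP (subset_trans sGG' sG'H) g Gg.
by rewrite inE Gg => /eqP.
Qed.

Lemma repr_invol_center (F : fieldType) (gT : finGroupType) (G : {group gT}) n
    (rG : mx_representation F G n) :
  n = 2%N -> (2%:R : F) != 0 -> mx_faithful rG -> (G \subset G^`(1))%g ->
  forall t, t \in G -> (t ^+ 2 = 1)%g -> (t \in 'Z(G))%g.
Proof.
move=> n2; subst n => n2 ffG sGG' t Gt t2.
have [c Mc] : exists c, rG t = c%:M.
  apply: invol22 => //; last exact: repr_det1.
  have tt : (t * t = 1)%g by rewrite -t2 expgS expg1.
  by rewrite -repr_mxM // tt repr_mx1.
apply/centerP; split => // g Gg.
apply: (mx_faithful_inj ffG); rewrite ?groupM //.
by rewrite !repr_mxM // Mc scalar_mxC.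
Qed.

Lemma repr_GL2_card (F : finFieldType) (gT : finGroupType) (G : {group gT}) n
    (rG : mx_representation F G n) :
  n = 2%N -> #|F| = 2%N -> mx_faithful rG -> (#|G| <= 6)%N.
Proof.
move=> n2; subst n => cF ffG.
rewrite -(card_in_imset (mx_faithful_inj ffG)).
have -> : 6%N = #|[pred M : 'M[F]_2 | M \is a GRing.unit]|.
  have := card_GL_2 F; rewrite cF cardsT /= card_sub.
  by move=> h; rewrite -[LHS]/(2 * 1 ^ 2 * 3)%N -h.
apply: subset_leq_card; apply/subsetP => _ /imsetP[g Gg ->].
by rewrite inE; exact: repr_mx_unit.
Qed.

Lemma small_simple (gT : finGroupType) (G : {group gT}) :
  simple G -> ~~ abelian G -> (#|G| <= 6)%N -> False.
Proof.
move=> simG nabG leG6.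
have abp : prime #|G| -> False.
  by move/prime_cyclic/cyclic_abelian; rewrite (negbTE nabG).
have pg : forall q, prime q -> (q.-group G)%g -> False.
  move=> q _ qG; exact: abp (simple_sol_prime (pgroup_sol qG) simG).
have := cardG_gt0 G.
case eG: #|G| leG6 => [|[|[|[|[|[|[|k]]]]]]] //= _ _.
- by apply: (pg 2%N) => //; rewrite /pgroup eG.
- by apply: abp; rewrite eG.
- by apply: abp; rewrite eG.
- by apply: (pg 2%N) => //; rewrite /pgroup eG.
- by apply: abp; rewrite eG.
have d3 : (3 %| #|G|)%N by rewrite eG.
have [x Gx ox] := Cauchy (isT : prime 3) d3.
have sxG : (<[x]> \subset G)%g by rewrite cycle_subG.
have ix : #|G : <[x]>|%g = 2%N.
  have := Lagrange sxG; rewrite eG -orderE ox.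
  by move/eqP; rewrite -[6%N]/(3 * 2)%N eqn_pmul2l // => /eqP.
have nx := index2_normal sxG ix.
case/simpleP: simG => _ /(_ _ nx) [] hx.
  by move: ox; rewrite /order hx cards1.
by move: ox; rewrite /order hx eG.
Qed.


Lemma PSL2_invol (F : finFieldType) :
  exists2 g, g \in PSL2 F & ((g != 1) && (g ^+ 2 == 1))%g.
Proof.
pose m0 : 'M[F]_2 := \matrix_(i, j) (if i == j then 0 else if i == 0 then 1 else -1).
pose u0 : 'M[F]_2 := \matrix_(i, j) (if (i == 1) && (j == 0) then 0 else 1).
have dm0 : \det m0 = 1.
  by rewrite det22 !mxE /= mul0r mul1r opprK add0r.
have du0 : \det u0 = 1 by rewrite det22 !mxE /= mulr1 mulr0 subr0.
have um0 : m0 \in unitmx by rewrite unitmxE dm0 unitr1.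
have uu0 : u0 \in unitmx by rewrite unitmxE du0 unitr1.
pose g0 : {'GL_2[F]} := FinRing.Unit um0.
pose v0 : {'GL_2[F]} := FinRing.Unit uu0.
have g0S : g0 \in SL2 F by rewrite inE; apply/eqP; exact: dm0.
have v0S : v0 \in SL2 F by rewrite inE; apply/eqP; exact: du0.
have mm : m0 *m m0 = (-1)%:M.
  apply/matrixP => i j; rewrite mul22 !mxE.
  by case: (ord2 i) => ->; case: (ord2 j) => -> /=;
    rewrite ?mulr0 ?mul0r ?add0r ?addr0 ?mulr1 ?mul1r ?mulrN1 ?mulN1r ?mulr1n ?mulr0n.
set Z := ('Z(SL2 F))%g.
have nZ : (SL2 F \subset 'N(Z))%g := normal_norm (center_normal _).
have zZ : (g0 * g0)%g \in Z.
  apply/centerP; split; first by rewrite groupM.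
  have e : forall a b : {'GL_2[F]}, \val (a * b)%g = \val a *m \val b by [].
  by move=> h Sh; apply: val_inj; rewrite !e /= mm scalar_mxC.
have gu : \val (g0 * v0)%g 0 0 != \val (v0 * g0)%g 0 0.
  by rewrite /= !mul22 !mxE /= mulr1 mulr0 addr0 mul1r add0r eq_sym oppr_eq0 oner_eq0.
have g0Z : g0 \notin Z.
  apply/negP => /centerP[_ /(_ v0 v0S) c].
  by move: gu; rewrite c eqxx.
have g0N : g0 \in 'N(Z)%g := subsetP nZ _ g0S.
exists (coset Z g0); first exact: mem_quotient.
apply/andP; split.
  by apply: contra g0Z => /eqP; apply: coset_idr.
by rewrite -morphX // expgS expg1; apply/eqP; apply: coset_id.
Qed.

End RingHelpers.

Section GroupHelpers.
Import GRing.Theory.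
Local Open Scope group_scope.


Lemma card_gen2_le (gT : finGroupType) (u v : gT) :
  commute u v -> (#|<<[set u; v]>>| <= #[u] * #[v])%N.
Proof.
move=> cuv.
have cc : commute <[u]> <[v]>.
  apply: centC; rewrite cycle_subG; apply/centP => w /cycleP[k ->].
  exact: commuteX.
have sub : <<[set u; v]>> \subset <[u]> * <[v]>.
  rewrite -comm_joingE // gen_subG; apply/subsetP => w.
  rewrite !inE => /orP[]/eqP->.
    by apply: (subsetP (joing_subl _ _)); exact: cycle_id.
  by apply: (subsetP (joing_subr _ _)); exact: cycle_id.
apply: leq_trans (subset_leq_card sub) _.
rewrite !orderE mul_cardG; apply: leq_pmulr; exact: cardG_gt0.
Qed.

Lemma core_int p (X : finGroupType) (P A : {group X}) :
  prime p -> p.-group P -> (exists x y : X, P = <<[set x; y]>> :> {set X}) ->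
  A \subset 'N(P) -> A :&: P = 1 -> 'C_A(P) = 1 ->
  simple A -> ~~ abelian A -> (exists2 t, t \in A & (t != 1) && (t ^+ 2 == 1)) ->
  False.
Proof.
move=> p_pr pP [x [y defP]] nPA tiAP cAP simA nabA [t At /andP[nt1 t2]].
set Phi := 'Phi(P).
have nPhiA : A \subset 'N(Phi) := char_norm_trans (Phi_char P) nPA.
have sPhiP : Phi \subset P := Phi_sub P.
have tiPhiA : Phi :&: A = 1.
  apply/trivgP; rewrite -tiAP subsetI subsetIr.
  exact: subset_trans (subsetIl _ _) sPhiP.
have abelV := Phi_quotient_abelem pP.
set V := P / Phi in abelV.
set G := A / Phi.
have isoA := quotient_isom nPhiA tiPhiA.
have isogA : A \isog G := quotient_isog nPhiA tiPhiA.
have simG : simple G by rewrite -(isog_simple isogA).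
have nabG : ~~ abelian G by rewrite -(isog_abelian isogA).
have nVG : G \subset 'N(V) := quotient_norms Phi nPA.
have nsKG : 'C_G(V) <| G.
  by have := subcent_normal G V; rewrite (setIidPl nVG).
have pPhi : p.-group Phi := pgroupS sPhiP pP.
have nPhiP : P \subset 'N(Phi) := normal_norm (Phi_normal P).
case/simpleP: (simG) => ntG /(_ _ nsKG) [] hK; last first.
  have nApg : ~~ p.-group A.
    apply/negP => pA; have := simple_sol_prime (pgroup_sol pA) simA.
    by move/prime_cyclic/cyclic_abelian; rewrite (negbTE nabA).
  have [q q_pr qA] : exists2 q, prime q & (q %| #|A|)%N && (q != p).
    case: (boolP (has (predC1 p) (primes #|A|))) => [/hasP[q] | hasN].
      by rewrite mem_primes => /and3P[q_pr _ qA] qp; exists q => //; rewrite qA.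
    case/negP: nApg; apply/pgroupP => q q_pr qA.
    apply: contraR hasN => qp; apply/hasP; exists q => //.
    by rewrite mem_primes q_pr cardG_gt0.
  case/andP: qA => qA qp.
  have [a Aa oa] := Cauchy q_pr qA.
  set C := <[a]>.
  have sCA : C \subset A by rewrite cycle_subG.
  have nPC := subset_trans sCA nPA.
  have nPhiC := subset_trans sCA nPhiA.
  have coPhiC : coprime #|Phi| #|C|.
    rewrite -orderE oa; apply: (pnat_coprime pPhi).
    by rewrite pnatE // !inE.
  have solPhi : solvable Phi := pgroup_sol pPhi.
  have eq1 := coprime_norm_quotient_cent nPC nPhiC coPhiC solPhi.
  have cGV : G \subset 'C(V) by have := subsetIr G 'C(V); rewrite hK.
  have cVC : V \subset 'C(C / Phi).
    by rewrite centsC; apply: subset_trans cGV; apply: quotientS.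
  rewrite (setIidPl cVC) in eq1.
  have sPM : P \subset Phi * 'C_P(C).
    by rewrite -quotientSK // eq1.
  have defP2 : 'Phi(P) <*> 'C_P(C) = P.
    apply/eqP; rewrite eqEsubset join_subG sPhiP subsetIl /=.
    apply: subset_trans sPM _; exact: mul_subG (joing_subl _ _) (joing_subr _ _).
  have := Phi_nongen defP2; rewrite genGid => eqCP.
  have aC : a \in 'C_A(P).
    rewrite inE Aa /= -cycle_subG centsC -eqCP; exact: subsetIr.
  move: oa; rewrite cAP inE in aC; rewrite (eqP aC) order1 => q1.
  by move: q_pr; rewrite -q1.
have ntV : V != 1.
  apply: contraNneq ntG => V1; rewrite -hK; apply/eqP; apply/esym/setIidPl.
  rewrite V1; exact: cents1.
have ffG := abelem_mx_faithful abelV ntV nVG hK.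
have dimE := dim_abelemE abelV ntV.
have xP : x \in P by rewrite defP mem_gen // !inE eqxx.
have yP : y \in P by rewrite defP mem_gen // !inE eqxx orbT.
have cxV : coset Phi x \in V by rewrite mem_quotient.
have cyV : coset Phi y \in V by rewrite mem_quotient.
have /(abelemP p_pr) [abV expV] := abelV.
have sV2 : V \subset <<[set coset Phi x; coset Phi y]>>.
  have sN : [set x; y] \subset 'N(Phi).
    by apply: subset_trans nPhiP; rewrite defP; apply: subset_gen.
  have := quotient_gen sN; rewrite -defP => h.
  have -> : V = <<[set x; y] / Phi>> by exact: h.
  rewrite /quotient morphimU !morphim_set1 //; apply: (subsetP nPhiP) => //.
have oV : (#|V| <= p * p)%N.
  apply: leq_trans (subset_leq_card sV2) _.
  apply: leq_trans (card_gen2_le _) _.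
    exact: (centsP abV).
  have op u : u \in V -> (#[u] <= p)%N.
    move=> uV; apply: dvdn_leq; first exact: prime_gt0.
    by rewrite order_dvdn expV.
  by apply: leq_mul; apply: op.
have ldim : (logn p #|V| <= 2)%N.
  rewrite -(leq_exp2l _ _ (prime_gt1 p_pr)) -card_pgroup ?(abelem_pgroup abelV) //.
set rG := abelem_repr abelV ntV nVG.
have sGG' : G \subset G^`(1).
  case/simpleP: (simG) => _ /(_ _ (der_normal 1 G)) [] hd; last by rewrite hd.
  by case/negP: nabG; apply/derG1P.
pose tG := coset Phi t.
have GtG : tG \in G by rewrite mem_quotient.
have tG2 : tG ^+ 2 = 1.
  by rewrite /tG -morphX ?(subsetP nPhiA) // (eqP t2) morph1.
have ntG1 : tG != 1.
  apply: contraNneq nt1 => tG1.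
  have tPhi : t \in Phi by apply: coset_idr => //; apply: (subsetP nPhiA).
  have : t \in Phi :&: A by rewrite inE tPhi At.
  by rewrite tiPhiA => /set1gP ->.
have := ldim; rewrite -dimE => ld.
have [n1|n2d] : (abelem_dim' (P / Phi)%G).+1 = 1%N \/ (abelem_dim' (P / Phi)%G).+1 = 2%N.
  by move: ld; case: (abelem_dim' _) => [|[|//]] _; [left|right].
  by case/negP: nabG; apply: (repr_dim1_abelian n1 ffG).
have [p2|p2] := eqVneq p 2.
  apply: (small_simple simG nabG).
  apply: (repr_GL2_card n2d _ ffG).
  by rewrite card_Fp.
have n2 : (2%:R : 'F_p)%R != 0%R.
  by rewrite -(dvdn_pcharf (pchar_Fp p_pr)) dvdn_prime2.
have ZtG := repr_invol_center n2d n2 ffG sGG' GtG tG2.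
case/simpleP: (simG) => _ /(_ _ (center_normal G)) [] hZ.
  by move: ZtG; rewrite hZ => /set1P; apply/eqP.
by case/negP: nabG; have := center_abelian G; rewrite hZ.
Qed.

Lemma core_perm p (gT : finGroupType) (P : {group gT}) (A : {group {perm gT}}) :
  prime p -> p.-group P -> (exists x y : gT, P = <<[set x; y]>> :> {set gT}) ->
  A \subset Aut P -> simple A -> ~~ abelian A ->
  (exists2 t, t \in A & (t != 1) && (t ^+ 2 == 1)) -> False.
Proof.
move=> p_pr pP [x [y defP]] sAAut simA nabA [t At /andP[nt1 t2]].
pose to := [Aut P]%gact.
pose s1 := sdpair1 to; pose s2 := sdpair2 to.
have inj1 : 'injm s1 := injm_sdpair1 to.
have inj2 : 'injm s2 := injm_sdpair2 to.
have At' := subsetP sAAut.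
apply: (@core_int p _ (s1 @* P) (s2 @* A)) => //.
- exact: morphim_pgroup.
- exists (s1 x), (s1 y).
  have sxy : [set x; y] \subset P by rewrite defP subset_gen.
  have := morphim_gen s1 sxy; rewrite -defP => h.
  transitivity <<s1 @* [set x; y]>>; first exact: h.
  have xP : x \in P by rewrite (subsetP sxy) // !inE eqxx.
  have yP : y \in P by rewrite (subsetP sxy) // !inE eqxx orbT.
  by rewrite morphimU !morphim_set1.
- exact: subset_trans (morphimS s2 sAAut) (im_sdpair_norm to).
- apply/trivgP; rewrite -(im_sdpair_TI to) subsetI subsetIr /=.
  exact: subset_trans (subsetIl _ _) (morphimS _ sAAut).
- apply/trivgP/subsetP => _ /setIP[/morphimP[a Da Aa ->] ca].
  suff -> : a = 1 by rewrite morph1 inE.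
  apply: (eq_Aut (At' _ Aa) (group1 _)) => z Pz.
  rewrite perm1; apply: (injmP inj1); rewrite ?Aut_closed ?At' //.
  have := sdpair_act to Pz Da; rewrite /= => ->.
  apply/conjg_fixP/commgP/esym/(centP ca); exact: mem_morphim.
- by rewrite (isog_simple (sub_isog sAAut inj2)) in simA.
- by rewrite injm_abelian.
- exists (s2 t); first by rewrite mem_morphim ?At'.
  rewrite morph_injm_eq1 ?At' // nt1 /= -morphX ?At' // (eqP t2) morph1 //.
Qed.

End GroupHelpers.

Local Open Scope group_scope.

Theorem lemma3p6 (p : nat) (gT : finGroupType) (P : {group gT})
    (F : finFieldType)
    (phi : {morphism PSL2 F >-> {perm gT}}) :
  prime p -> p.-group P ->
  (exists x y : gT, P = <<[set x; y]>>%g :> {set gT}) ->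
  simple (PSL2 F) -> ~~ abelian (PSL2 F) ->
  (phi @* PSL2 F \subset Aut P)%g ->
  (forall g, g \in PSL2 F -> forall x, x \in P -> phi g x = x).
Proof.
move=> p_pr pP gen simPSL nabPSL sub g Pg x Px.
have nsK := ker_normal phi.
case/simpleP: (simPSL) => _ /(_ _ nsK) [] hK; last first.
  have gK : g \in 'ker phi by rewrite hK.
  by rewrite (mker gK) perm1.
exfalso.
have injphi : 'injm phi by rewrite hK.
have [g1 Pg1 /andP[n1 e1]] := PSL2_invol F.
apply: (core_perm p_pr pP gen sub).
- by rewrite (isog_simple (sub_isog (subxx _) injphi)) in simPSL.
- by rewrite injm_abelian.
- exists (phi g1); first exact: mem_morphim.
  by rewrite morph_injm_eq1 // n1 /= -morphX // (eqP e1) morph1.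
Qed.
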